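(* Let $(B,D,d,\theta)$ be a regular E-system, $\mathcal A=\mathcal A_{B\to D}$ its associated Ann-category, $Q$ a ring and $\psi:Q\to\operatorname{Coker}d$ a ring homomorphism. Then assigning to an Ann-functor $F:\mathrm{Dis}\,Q\to\mathcal A$ (inducing $\psi$ on $\pi_0$) its associated extension $\mathcal E_F$ (the crossed-product extension $0\to B\to E_0\to Q\to0$, $E_0=B\times Q$ with $(b,u)+(b',u')=(b+b'+f(u,u'),u+u')$, $(b,u)(b',u')=(bb'+b\theta_{F u'}+\theta_{Fu}b'+g(u,u'),uu')$, $f(u,v)=\breve F_{u,v}$, $g(u,v)=\widetilde F_{u,v}$, and $\varepsilon(b,u)=d(b)+F(u)$) induces a bijection $$\Omega:\mathrm{Hom}^{Ann}_{(\psi,0)}[\mathrm{Dis}\,Q,\mathcal A]\to\mathrm{Ext}_{B\to D}(Q,B,\psi).$$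
   Context: E-system $(B,D,d,\theta)$: $B$ a ring, $D$ a unital ring, $d:B\to D$, $\theta:D\to M_B$ ring homomorphisms into the ring of bimultiplications of $B$ with $\theta(d(b))=\mu_b$ (inner bimultiplication $c\mapsto bc$, $c\mapsto cb$), $d(\theta_xb)=x\,d(b)$, $d(b\theta_x)=d(b)x$; regular if $\theta(1)=1$ and any two $\sigma,\tau\in\theta(D)$ are permutable ($\sigma(a\tau)=(\sigma a)\tau$, $\tau(a\sigma)=(\tau a)\sigma$). Morphism of E-systems $(f_1,f_0)$: ring homomorphisms with $f_0d=d'f_1$, $f_1(\theta_xb)=\theta'_{f_0(x)}f_1(b)$, $f_1(b\theta_x)=f_1(b)\theta'_{f_0(x)}$. Associated Ann-category $\mathcal A_{B\to D}$: objects elements of $D$, morphisms $x\to y$ the $b\in B$ with $y=d(b)+x$, composition by addition, $\oplus,\otimes$ given by $+,\cdot$ on objects and by $b+b'$, $bb'+b\theta_{x'}+\theta_xb'$ on morphisms $x\xrightarrow{b}y$, $x'\xrightarrow{b'}y'$; all constraints identities. Here $\pi_0\mathcal A=\operatorname{Coker}d$, $\pi_1\mathcal A=\operatorname{Aut}(0)=\operatorname{Ker}d$. $\mathrm{Dis}\,Q$: strict Ann-category with objects elements of $Q$ and only identity morphisms. An Ann-functor is a functor with natural isomorphisms $\breve F:F(X\oplus Y)\to FX\oplus FY$, $\widetilde F:F(X\otimes Y)\to FX\otimes FY$ making it symmetric monoidal for $\oplus$, monoidal for $\otimes$, compatible with distributivity; a homotopy is a natural transformation compatible with both structures. $\mathrm{Hom}^{Ann}_{(\psi,0)}[\mathrm{Dis}\,Q,\mathcal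 A]$ is the set of homotopy classes of Ann-functors $F:\mathrm{Dis}\,Q\to\mathcal A$ whose induced map on $\pi_0$ is $\psi$ (i.e. $F(u)\in\psi(u)$). A ring extension of $B$ by $Q$ of type $B\to D$: an exact sequence of ring homomorphisms $0\to B\xrightarrow{j}E\xrightarrow{p}Q\to0$ and a ring homomorphism $\varepsilon:E\to D$ such that $(B,E,j,\theta')$ with $\theta'$ of bimultiplication type ($\theta'_eb=eb$, $b\theta'_e=be$) is an E-system and $(\mathrm{id}_B,\varepsilon)$ is a morphism of E-systems; it induces $\psi:Q\to\operatorname{Coker}d$ with $\psi p=q\varepsilon$. Two such extensions $(E,j,p,\varepsilon)$, $(E',j',p',\varepsilon')$ are equivalent if there is a ring homomorphism $\eta:E\to E'$ with $\eta j=j'$, $p'\eta=p$, $\varepsilon'\eta=\varepsilon$. $\mathrm{Ext}_{B\to D}(Q,B,\psi)$ is the set of equivalence classes of extensions of $B$ by $Q$ of type $B\to D$ inducing $\psi$. *)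

(* Defs.v *)
(* MathComp rings are unital and carry decidable equality /
   choice; here B is a NON-unital ring and extensions E range over arbitrary
   rings, so rings are given concretely as carriers with operations plus the
   ring axioms as propositions. *)
From Stdlib Require Import ClassicalEpsilon.

Record rng := Rng {
  rcar :> Type;
  rzero : rcar;
  radd : rcar -> rcar -> rcar;
  ropp : rcar -> rcar;
  rmul : rcar -> rcar -> rcar }.

Record ring := Ring { rbase :> rng; rone : rbase }.

Definition is_rng (R : rng) : Prop :=
  (forall x y z, radd R x (radd R y z) = radd R (radd R x y) z) /\
  (forall x y, radd R x y = radd R y x) /\
  (forall x, radd R (rzero R) x = x) /\
  (forall x, radd R (ropp R x) x = rzero R) /\
  (forall x y z, rmul R x (rmul R y z) = rmul R (rmul R x y) z) /\
  (forall x y z, rmul R x (radd R y z) = radd R (rmul R x y) (rmul R x z)) /\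
  (forall x y z, rmul R (radd R x y) z = radd R (rmul R x z) (rmul R y z)).

Definition is_ring (R : ring) : Prop :=
  is_rng R /\ (forall x, rmul R (rone R) x = x) /\ (forall x, rmul R x (rone R) = x).

Definition rng_hom (R S : rng) (h : R -> S) : Prop :=
  (forall x y, h (radd R x y) = radd S (h x) (h y)) /\
  (forall x y, h (rmul R x y) = rmul S (h x) (h y)).

Definition ring_hom (R S : ring) (h : R -> S) : Prop :=
  rng_hom R S h /\ h (rone R) = rone S.

(* s = (bl s, br s):  bl s b = "sigma b",  br s b = "b sigma" *)
Record bimul (B : Type) := Bimul { bl : B -> B; br : B -> B }.
Arguments Bimul {B}. Arguments bl {B}. Arguments br {B}.

Definition is_bimul (B : rng) (s : bimul B) : Prop :=
  forall a b,
    bl s (radd B a b) = radd B (bl s a) (bl s b) /\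
    br s (radd B a b) = radd B (br s a) (br s b) /\
    bl s (rmul B a b) = rmul B (bl s a) b /\
    br s (rmul B a b) = rmul B a (br s b) /\
    rmul B a (bl s b) = rmul B (br s a) b.

(* th : D -> M_B is a ring homomorphism into the ring of bimultiplications
   (sum pointwise; (s t) a = s (t a), a (s t) = (a s) t) *)
Definition bimul_hom (B : rng) (D : ring) (th : D -> bimul B) : Prop :=
  (forall x, is_bimul B (th x)) /\
  (forall x y b,
     bl (th (radd D x y)) b = radd B (bl (th x) b) (bl (th y) b) /\
     br (th (radd D x y)) b = radd B (br (th x) b) (br (th y) b) /\
     bl (th (rmul D x y)) b = bl (th x) (bl (th y) b) /\
     br (th (rmul D x y)) b = br (th y) (br (th x) b)).

Definition Esystem (B : rng) (D : ring) (d : B -> D) (th : D -> bimul B) : Prop :=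
  rng_hom B D d /\ bimul_hom B D th /\
  (forall b c, bl (th (d b)) c = rmul B b c /\ br (th (d b)) c = rmul B c b) /\
  (forall x b, d (bl (th x) b) = rmul D x (d b) /\ d (br (th x) b) = rmul D (d b) x).

Definition regular_Esystem (B : rng) (D : ring) (d : B -> D) (th : D -> bimul B) : Prop :=
  Esystem B D d th /\
  (forall b, bl (th (rone D)) b = b /\ br (th (rone D)) b = b) /\
  (forall x y b, bl (th x) (br (th y) b) = br (th y) (bl (th x) b) /\
                 bl (th y) (br (th x) b) = br (th x) (bl (th y) b)).

Definition Esystem_morphism (B : rng) (D : ring) (d : B -> D) (th : D -> bimul B)
  (B' : rng) (D' : ring) (d' : B' -> D') (th' : D' -> bimul B')
  (f1 : B -> B') (f0 : D -> D') : Prop :=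
  rng_hom B B' f1 /\ ring_hom D D' f0 /\
  (forall b, f0 (d b) = d' (f1 b)) /\
  (forall x b, f1 (bl (th x) b) = bl (th' (f0 x)) (f1 b) /\
               f1 (br (th x) b) = br (th' (f0 x)) (f1 b)).

(* (C, q) presents Coker d = D / d(B) *)
Definition is_coker (B : rng) (D : ring) (d : B -> D) (C : ring) (q : D -> C) : Prop :=
  ring_hom D C q /\ (forall c, exists x, q x = c) /\
  (forall x, q x = rzero C <-> exists b, x = d b).

Definition A_mor (B : rng) (D : ring) (d : B -> D) (x y : D) (b : B) : Prop :=
  y = radd D (d b) x.
Definition A_id (B : rng) : B := rzero B.
Definition A_comp (B : rng) (b c : B) : B := radd B b c.   (* b then c *)
Definition A_inv (B : rng) (b : B) : B := ropp B b.
Definition A_sum (B : rng) (b b' : B) : B := radd B b b'.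
Definition A_tensor (B : rng) (D : ring) (th : D -> bimul B) (x x' : D) (b b' : B) : B :=
  radd B (radd B (rmul B b b') (br (th x') b)) (bl (th x) b').

(* Ann-functor (F, F-breve = f, F-tilde = g) : Dis Q -> A_{B->D}, written out
   (Dis Q and A_{B->D} have identity constraints). *)
Definition ann_functor (B : rng) (D : ring) (d : B -> D) (th : D -> bimul B) (Q : ring)
  (F : Q -> D) (f g : Q -> Q -> B) : Prop :=
  (forall u v, A_mor B D d (F (radd Q u v)) (radd D (F u) (F v)) (f u v)) /\
  (forall u v, A_mor B D d (F (rmul Q u v)) (rmul D (F u) (F v)) (g u v)) /\
  (forall u v w,
     A_comp B (f (radd Q u v) w) (A_sum B (f u v) (A_id B)) =
     A_comp B (f u (radd Q v w)) (A_sum B (A_id B) (f v w))) /\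
  (forall u v, f v u = f u v) /\
  (exists b0, A_mor B D d (rzero D) (F (rzero Q)) b0 /\
     forall u, A_comp B (f (rzero Q) u) (A_sum B (A_inv B b0) (A_id B)) = A_id B /\
               A_comp B (f u (rzero Q)) (A_sum B (A_id B) (A_inv B b0)) = A_id B) /\
  (forall u v w,
     A_comp B (g (rmul Q u v) w)
              (A_tensor B D th (F (rmul Q u v)) (F w) (g u v) (A_id B)) =
     A_comp B (g u (rmul Q v w))
              (A_tensor B D th (F u) (F (rmul Q v w)) (A_id B) (g v w))) /\
  (exists c0, A_mor B D d (rone D) (F (rone Q)) c0 /\
     forall u,
       A_comp B (g (rone Q) u) (A_tensor B D th (F (rone Q)) (F u) (A_inv B c0) (A_id B)) = A_id B /\
       A_comp B (g u (rone Q)) (A_tensor B D th (F u) (F (rone Q)) (A_id B) (A_inv B c0)) = A_id B) /\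
  (forall u v w,
     A_comp B (g u (radd Q v w)) (A_tensor B D th (F u) (F (radd Q v w)) (A_id B) (f v w)) =
     A_comp B (f (rmul Q u v) (rmul Q u w)) (A_sum B (g u v) (g u w))) /\
  (forall u v w,
     A_comp B (g (radd Q u v) w) (A_tensor B D th (F (radd Q u v)) (F w) (f u v) (A_id B)) =
     A_comp B (f (rmul Q u w) (rmul Q v w)) (A_sum B (g u w) (g v w))).

Definition induces_psi (Q : ring) (D C : ring) (q : D -> C) (psi : Q -> C) (F : Q -> D) : Prop :=
  forall u, q (F u) = psi u.

Definition ann_homotopic (B : rng) (D : ring) (d : B -> D) (th : D -> bimul B) (Q : ring)
  (F : Q -> D) (f g : Q -> Q -> B) (F' : Q -> D) (f' g' : Q -> Q -> B) : Prop :=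
  exists a : Q -> B,
    (forall u, A_mor B D d (F u) (F' u) (a u)) /\
    (forall u v, A_comp B (a (radd Q u v)) (f' u v) = A_comp B (f u v) (A_sum B (a u) (a v))) /\
    (forall u v, A_comp B (a (rmul Q u v)) (g' u v) =
                 A_comp B (g u v) (A_tensor B D th (F u) (F v) (a u) (a v))).

Definition is_extension (B : rng) (D : ring) (d : B -> D) (th : D -> bimul B) (Q : ring)
  (E : ring) (j : B -> E) (p : E -> Q) (eps : E -> D) : Prop :=
  is_ring E /\
  rng_hom B E j /\ ring_hom E Q p /\
  (forall b b', j b = j b' -> b = b') /\
  (forall u, exists e, p e = u) /\
  (forall e, p e = rzero Q <-> exists b, e = j b) /\
  ring_hom E D eps /\
  exists th' : E -> bimul B,
    (forall e b, j (bl (th' e) b) = rmul E e (j b) /\ j (br (th' e) b) = rmul E (j b) e) /\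
    Esystem B E j th' /\
    Esystem_morphism B E j th' B D d th (fun b => b) eps.

Definition ext_induces_psi (Q : ring) (D C : ring) (q : D -> C) (psi : Q -> C)
  (E : ring) (p : E -> Q) (eps : E -> D) : Prop :=
  forall e, psi (p e) = q (eps e).

Definition ext_equiv (B : rng) (D Q : ring)
  (E : ring) (j : B -> E) (p : E -> Q) (eps : E -> D)
  (E' : ring) (j' : B -> E') (p' : E' -> Q) (eps' : E' -> D) : Prop :=
  exists eta : E -> E',
    ring_hom E E' eta /\ (forall b, eta (j b) = j' b) /\
    (forall e, p' (eta e) = p e) /\ (forall e, eps' (eta e) = eps e).

Definition EF_add (B : rng) (D : ring) (th : D -> bimul B) (Q : ring)
  (F : Q -> D) (f g : Q -> Q -> B) (x y : rcar B * rcar Q) : rcar B * rcar Q :=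
  let (b, u) := x in let (b', u') := y in
  (radd B (radd B b b') (f u u'), radd Q u u').

Definition EF_mul (B : rng) (D : ring) (th : D -> bimul B) (Q : ring)
  (F : Q -> D) (f g : Q -> Q -> B) (x y : rcar B * rcar Q) : rcar B * rcar Q :=
  let (b, u) := x in let (b', u') := y in
  (radd B (radd B (radd B (rmul B b b') (br (th (F u')) b)) (bl (th (F u)) b')) (g u u'),
   rmul Q u u').

Definition EF_inh (B : rng) (Q : ring) : inhabited (rcar B * rcar Q) :=
  inhabits (rzero B, rzero Q).

(* zero, negatives and unit of E_0 are those determined by + and . *)
Definition EF_zero (B : rng) (D : ring) (th : D -> bimul B) (Q : ring)
  (F : Q -> D) (f g : Q -> Q -> B) : rcar B * rcar Q :=
  epsilon (EF_inh B Q) (fun z => forall x, EF_add B D th Q F f g z x = x).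
Definition EF_opp (B : rng) (D : ring) (th : D -> bimul B) (Q : ring)
  (F : Q -> D) (f g : Q -> Q -> B) (x : rcar B * rcar Q) : rcar B * rcar Q :=
  epsilon (EF_inh B Q) (fun y => EF_add B D th Q F f g y x = EF_zero B D th Q F f g).
Definition EF_one (B : rng) (D : ring) (th : D -> bimul B) (Q : ring)
  (F : Q -> D) (f g : Q -> Q -> B) : rcar B * rcar Q :=
  epsilon (EF_inh B Q)
    (fun e => forall x, EF_mul B D th Q F f g e x = x /\ EF_mul B D th Q F f g x e = x).

Definition EF (B : rng) (D : ring) (th : D -> bimul B) (Q : ring)
  (F : Q -> D) (f g : Q -> Q -> B) : ring :=
  Ring (Rng (rcar B * rcar Q) (EF_zero B D th Q F f g) (EF_add B D th Q F f g)
            (EF_opp B D th Q F f g) (EF_mul B D th Q F f g))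
       (EF_one B D th Q F f g).

(* B -> E_0 : b |-> (b - F-breve_{0,0}, 0)  (this is b |-> (b,0) for
   normalized F);  E_0 -> Q : (b,u) |-> u;  eps : (b,u) |-> d(b) + F(u) *)
Definition EF_j (B : rng) (D : ring) (th : D -> bimul B) (Q : ring)
  (F : Q -> D) (f g : Q -> Q -> B) (b : B) : EF B D th Q F f g :=
  (radd B b (ropp B (f (rzero Q) (rzero Q))), rzero Q).
Definition EF_p (B : rng) (D : ring) (th : D -> bimul B) (Q : ring)
  (F : Q -> D) (f g : Q -> Q -> B) (x : EF B D th Q F f g) : Q := snd x.
Definition EF_eps (B : rng) (D : ring) (d : B -> D) (th : D -> bimul B) (Q : ring)
  (F : Q -> D) (f g : Q -> Q -> B) (x : EF B D th Q F f g) : D :=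
  radd D (d (fst x)) (F (snd x)).

(* Main.v *)
Require Import Defs.
From Stdlib Require Import List Arith Lia ClassicalEpsilon.
Import ListNotations.

Section AG.
Variable R : rng.
Hypothesis HR : is_rng R.
Local Notation "x + y" := (radd R x y).
Local Notation "- x" := (ropp R x).
Local Notation "0" := (rzero R).
Local Notation "x * y" := (rmul R x y).

Lemma g_addA x y z : x + (y + z) = (x + y) + z.
Proof. apply HR. Qed.
Lemma g_addC x y : x + y = y + x.
Proof. apply HR. Qed.
Lemma g_add0l x : 0 + x = x.
Proof. apply HR. Qed.
Lemma g_addNl x : - x + x = 0.
Proof. apply HR. Qed.
Lemma g_add0r x : x + 0 = x.
Proof. rewrite g_addC; apply g_add0l. Qed.
Lemma g_addNr x : x + - x = 0.
Proof. rewrite g_addC; apply g_addNl. Qed.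
Lemma g_cancel x y z : x + y = x + z -> y = z.
Proof.
  intro H. rewrite <- (g_add0l y), <- (g_add0l z), <- (g_addNl x), <- !g_addA, H. reflexivity.
Qed.
Lemma g_opp_uniq x y : x + y = 0 -> y = - x.
Proof. intro H. apply (g_cancel x). rewrite H, g_addNr. reflexivity. Qed.
Lemma g_eq_sub x y : x + - y = 0 -> x = y.
Proof. intro H. apply (g_cancel (- y)). rewrite g_addNl, g_addC. exact H. Qed.
Lemma g_mul0l x : 0 * x = 0.
Proof.
  apply (g_cancel (0 * x)). rewrite g_add0r.
  destruct HR as (_&_&_&_&_&_&Hd). rewrite <- Hd, g_add0l. reflexivity.
Qed.
Lemma g_mul0r x : x * 0 = 0.
Proof.
  apply (g_cancel (x * 0)). rewrite g_add0r.
  destruct HR as (_&_&_&_&_&Hd&_). rewrite <- Hd, g_add0l. reflexivity.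
Qed.
Lemma g_mulDr x y z : x * (y + z) = x * y + x * z.
Proof. apply HR. Qed.
Lemma g_mulDl x y z : (x + y) * z = x * z + y * z.
Proof. apply HR. Qed.
Lemma g_mulA x y z : x * (y * z) = (x * y) * z.
Proof. apply HR. Qed.
Lemma g_mulNl x y : (- x) * y = - (x * y).
Proof. apply g_opp_uniq. rewrite <- g_mulDl, g_addNr. apply g_mul0l. Qed.
Lemma g_mulNr x y : x * (- y) = - (x * y).
Proof. apply g_opp_uniq. rewrite <- g_mulDr, g_addNr. apply g_mul0r. Qed.
Lemma g_opp0 : - 0 = 0.
Proof. symmetry. apply g_opp_uniq. apply g_add0l. Qed.
Lemma g_oppK x : - - x = x.
Proof. symmetry. apply g_opp_uniq. apply g_addNl. Qed.
Lemma g_oppD x y : - (x + y) = - x + - y.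
Proof.
  symmetry. apply g_opp_uniq.
  rewrite (g_addC x y), <- g_addA, (g_addA x (- x)), g_addNr, g_add0l, g_addNr. reflexivity.
Qed.

Fixpoint nsm (n : nat) (x : R) : R := match n with O => 0 | S k => x + nsm k x end.
Definition tm (c : nat * nat) x := nsm (fst c) x + - nsm (snd c) x.
Fixpoint nfi (env : list R) (l : list (nat * nat)) : R :=
  match l with [] => 0 | c :: l' => tm c (hd 0 env) + nfi (tl env) l' end.

Lemma nsm_add m n x : nsm (m + n) x = nsm m x + nsm n x.
Proof. induction m; simpl. now rewrite g_add0l. now rewrite IHm, g_addA. Qed.

Lemma g_swap4 a b c e : (a + b) + (c + e) = (a + c) + (b + e).
Proof.
  rewrite <- !g_addA. f_equal. rewrite !g_addA. f_equal. apply g_addC.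
Qed.

Lemma tm_add a b c e x : tm (a + c, b + e)%nat x = tm (a, b) x + tm (c, e) x.
Proof. unfold tm; simpl. rewrite !nsm_add, g_oppD. apply g_swap4. Qed.

Lemma tm_neg a b x : tm (b, a) x = - tm (a, b) x.
Proof. unfold tm; simpl. rewrite g_oppD, g_oppK. apply g_addC. Qed.

Lemma tm_eq a b c e x : (a + e = c + b)%nat -> tm (a, b) x = tm (c, e) x.
Proof.
  intro H. unfold tm; simpl.
  assert (H2 : nsm a x + nsm e x = nsm c x + nsm b x) by (rewrite <- !nsm_add, H; reflexivity).
  apply g_eq_sub. rewrite g_oppD, g_oppK.
  rewrite (g_addC (- nsm c x) (nsm e x)), g_swap4, H2, (g_addC (- nsm b x)), <- g_oppD.
  apply g_addNr.
Qed.

Lemma tm_zero a b x : a = b -> tm (a, b) x = 0.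
Proof. intros ->. apply g_addNr. Qed.

Fixpoint nf_add (l1 l2 : list (nat * nat)) : list (nat * nat) :=
  match l1, l2 with
  | [], l => l
  | l, [] => l
  | (a, b) :: r1, (c, e) :: r2 => (a + c, b + e)%nat :: nf_add r1 r2
  end.
Definition nf_neg (l : list (nat * nat)) := map (fun c => (snd c, fst c)) l.
Fixpoint single (n : nat) : list (nat * nat) :=
  match n with O => [(1, 0)%nat] | S k => (0, 0)%nat :: single k end.

Lemma nfi_add env l1 l2 : nfi env (nf_add l1 l2) = nfi env l1 + nfi env l2.
Proof.
  revert env l2; induction l1 as [|[a b] r IH]; intros env l2; simpl.
  - now rewrite g_add0l.
  - destruct l2 as [|[c e] r2]; simpl. now rewrite g_add0r.
    rewrite IH, tm_add. apply g_swap4.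
Qed.

Lemma nfi_neg env l : nfi env (nf_neg l) = - nfi env l.
Proof.
  revert env; induction l as [|[a b] r IH]; intros env; simpl.
  - now rewrite g_opp0.
  - rewrite IH, tm_neg, g_oppD. reflexivity.
Qed.

Lemma nfi_single env n : nfi env (single n) = nth n env 0.
Proof.
  revert env; induction n; intros env; simpl.
  - unfold tm; simpl. rewrite g_add0r, g_opp0, !g_add0r. destruct env; reflexivity.
  - rewrite IHn, tm_zero by reflexivity. rewrite g_add0l. destruct env; simpl; auto.
    destruct n; reflexivity.
Qed.

Fixpoint nf_z (l : list (nat * nat)) : bool :=
  match l with [] => true | (a, b) :: r => Nat.eqb a b && nf_z r end.
Fixpoint nf_eqb (l1 l2 : list (nat * nat)) : bool :=
  match l1, l2 with
  | [], l => nf_z l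
  | l, [] => nf_z l
  | (a, b) :: r1, (c, e) :: r2 => Nat.eqb (a + e) (c + b) && nf_eqb r1 r2
  end.

Lemma nf_z_sound env l : nf_z l = true -> nfi env l = 0.
Proof.
  revert env; induction l as [|[a b] r IH]; intros env H; simpl in *. reflexivity.
  apply andb_prop in H; destruct H as [H1 H2]. apply Nat.eqb_eq in H1.
  rewrite IH, tm_zero by auto. apply g_add0r.
Qed.

Lemma nf_eqb_sound env l1 l2 : nf_eqb l1 l2 = true -> nfi env l1 = nfi env l2.
Proof.
  revert env l2; induction l1 as [|[a b] r IH]; intros env l2 H.
  - simpl in H. rewrite (nf_z_sound env l2 H). reflexivity.
  - destruct l2 as [|[c e] r2].
    + change (nf_z ((a, b) :: r) = true) in H. rewrite (nf_z_sound env _ H). reflexivity.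
    + simpl in *. apply andb_prop in H; destruct H as [H1 H2]. apply Nat.eqb_eq in H1.
      rewrite (IH _ _ H2), (tm_eq a b c e) by auto. reflexivity.
Qed.

Inductive gx := GA (n : nat) | G0 | GP (a b : gx) | GN (a : gx).
Fixpoint gi (env : list R) (e : gx) : R :=
  match e with
  | GA n => nth n env 0
  | G0 => 0
  | GP a b => gi env a + gi env b
  | GN a => - gi env a
  end.
Fixpoint nf (e : gx) : list (nat * nat) :=
  match e with
  | GA n => single n | G0 => [] | GP a b => nf_add (nf a) (nf b) | GN a => nf_neg (nf a)
  end.
Lemma nf_sound env e : gi env e = nfi env (nf e).
Proof.
  induction e; simpl.
  - now rewrite nfi_single.
  - reflexivity.
  - now rewrite nfi_add, IHe1, IHe2.
  - now rewrite nfi_neg, IHe.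
Qed.
Lemma gsound env e1 e2 : nf_eqb (nf e1) (nf e2) = true -> gi env e1 = gi env e2.
Proof. intro H. rewrite !nf_sound. now apply nf_eqb_sound. Qed.
End AG.

Ltac find_idx x env :=
  lazymatch env with
  | x :: _ => constr:(O)
  | _ :: ?r => let k := find_idx x r in constr:(S k)
  end.
Ltac app_end env t :=
  lazymatch env with
  | nil => constr:(cons t nil)
  | ?h :: ?r => let r' := app_end r t in constr:(h :: r')
  end.
Ltac llen env :=
  lazymatch env with nil => constr:(O) | _ :: ?r => let k := llen r in constr:(S k) end.

Ltac reify t env :=
  lazymatch t with
  | radd _ ?a ?b =>
      let r1 := reify a env in
      lazymatch r1 with (?e1, ?env1) =>
        let r2 := reify b env1 in
        lazymatch r2 with (?e2, ?env2) => constr:((GP e1 e2, env2)) end end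
  | ropp _ ?a =>
      let r1 := reify a env in
      lazymatch r1 with (?e1, ?env1) => constr:((GN e1, env1)) end
  | rzero _ => constr:((G0, env))
  | _ =>
      match constr:(tt) with
      | _ => let k := find_idx t env in constr:((GA k, env))
      | _ => let k := llen env in let env' := app_end env t in constr:((GA k, env'))
      end
  end.

Ltac agroup HR :=
  lazymatch goal with
  | |- @eq (rcar ?R) ?l ?r =>
    let r1 := reify l (@nil (rcar R)) in
    lazymatch r1 with (?e1, ?env1) =>
      let r2 := reify r env1 in
      lazymatch r2 with (?e2, ?env2) =>
        refine (gsound R HR env2 e1 e2 _); vm_compute; reflexivity
      end end
  end.

Goal forall (R : rng) (HR : is_rng R) (a b c : R),
  radd R a (radd R (ropp R b) (radd R c b)) = radd R c (radd R (rzero R) a).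
Proof. intros. agroup HR. Qed.

Lemma pair_eq {A C : Type} (a a' : A) (u u' : C) : a = a' -> u = u' -> (a, u) = (a', u').
Proof. intros -> ->; reflexivity. Qed.

Section ES.
Variable B : rng.
Variable D : ring.
Variable d : B -> D.
Variable th : D -> bimul B.
Hypothesis HB : is_rng B.
Hypothesis HD : is_ring D.
Hypothesis Hreg : regular_Esystem B D d th.

Let HDr : is_rng D := proj1 HD.

Lemma e_bl_add x a b : bl (th x) (radd B a b) = radd B (bl (th x) a) (bl (th x) b).
Proof. destruct Hreg as ((_&(Hb&_)&_)&_). apply (Hb x a b). Qed.
Lemma e_br_add x a b : br (th x) (radd B a b) = radd B (br (th x) a) (br (th x) b).
Proof. destruct Hreg as ((_&(Hb&_)&_)&_). apply (Hb x a b). Qed.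
Lemma e_bl_mul x a b : bl (th x) (rmul B a b) = rmul B (bl (th x) a) b.
Proof. destruct Hreg as ((_&(Hb&_)&_)&_). apply (Hb x a b). Qed.
Lemma e_br_mul x a b : br (th x) (rmul B a b) = rmul B a (br (th x) b).
Proof. destruct Hreg as ((_&(Hb&_)&_)&_). apply (Hb x a b). Qed.
Lemma e_mul_bl x a b : rmul B a (bl (th x) b) = rmul B (br (th x) a) b.
Proof. destruct Hreg as ((_&(Hb&_)&_)&_). apply (Hb x a b). Qed.
Lemma e_bl_0 x : bl (th x) (rzero B) = rzero B.
Proof.
  apply (g_cancel B HB (bl (th x) (rzero B))). rewrite <- e_bl_add, !g_add0r by exact HB. reflexivity.
Qed.
Lemma e_br_0 x : br (th x) (rzero B) = rzero B.
Proof.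
  apply (g_cancel B HB (br (th x) (rzero B))). rewrite <- e_br_add, !g_add0r by exact HB. reflexivity.
Qed.
Lemma e_bl_opp x a : bl (th x) (ropp B a) = ropp B (bl (th x) a).
Proof. apply g_opp_uniq; auto. rewrite <- e_bl_add, g_addNr, e_bl_0; auto. Qed.
Lemma e_br_opp x a : br (th x) (ropp B a) = ropp B (br (th x) a).
Proof. apply g_opp_uniq; auto. rewrite <- e_br_add, g_addNr, e_br_0; auto. Qed.

Lemma e_th_addl x y b : bl (th (radd D x y)) b = radd B (bl (th x) b) (bl (th y) b).
Proof. destruct Hreg as ((_&(_&Hb)&_)&_). apply (Hb x y b). Qed.
Lemma e_th_addr x y b : br (th (radd D x y)) b = radd B (br (th x) b) (br (th y) b).
Proof. destruct Hreg as ((_&(_&Hb)&_)&_). apply (Hb x y b). Qed.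
Lemma e_th_mull x y b : bl (th (rmul D x y)) b = bl (th x) (bl (th y) b).
Proof. destruct Hreg as ((_&(_&Hb)&_)&_). apply (Hb x y b). Qed.
Lemma e_th_mulr x y b : br (th (rmul D x y)) b = br (th y) (br (th x) b).
Proof. destruct Hreg as ((_&(_&Hb)&_)&_). apply (Hb x y b). Qed.
Lemma e_th_dl b c : bl (th (d b)) c = rmul B b c.
Proof. destruct Hreg as ((_&_&Hb&_)&_). apply (Hb b c). Qed.
Lemma e_th_dr b c : br (th (d b)) c = rmul B c b.
Proof. destruct Hreg as ((_&_&Hb&_)&_). apply (Hb b c). Qed.
Lemma e_th_0l b : bl (th (rzero D)) b = rzero B.
Proof.
  apply (g_cancel B HB (bl (th (rzero D)) b)). rewrite <- e_th_addl, g_add0r, g_add0r; auto.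
Qed.
Lemma e_th_0r b : br (th (rzero D)) b = rzero B.
Proof.
  apply (g_cancel B HB (br (th (rzero D)) b)). rewrite <- e_th_addr, g_add0r, g_add0r; auto.
Qed.
Lemma e_th_oppl x b : bl (th (ropp D x)) b = ropp B (bl (th x) b).
Proof. apply g_opp_uniq; auto. rewrite <- e_th_addl, g_addNr, e_th_0l; auto. Qed.
Lemma e_th_oppr x b : br (th (ropp D x)) b = ropp B (br (th x) b).
Proof. apply g_opp_uniq; auto. rewrite <- e_th_addr, g_addNr, e_th_0r; auto. Qed.
Lemma e_th_1l b : bl (th (rone D)) b = b.
Proof. destruct Hreg as (_&H1&_). apply H1. Qed.
Lemma e_th_1r b : br (th (rone D)) b = b.
Proof. destruct Hreg as (_&H1&_). apply H1. Qed.
Lemma e_perm x y b : br (th y) (bl (th x) b) = bl (th x) (br (th y) b).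
Proof. destruct Hreg as (_&_&H1). symmetry. apply H1. Qed.

Lemma e_d_add a b : d (radd B a b) = radd D (d a) (d b).
Proof. destruct Hreg as (((H&_)&_)&_). apply H. Qed.
Lemma e_d_mul a b : d (rmul B a b) = rmul D (d a) (d b).
Proof. destruct Hreg as (((_&H)&_)&_). apply H. Qed.
Lemma e_d_0 : d (rzero B) = rzero D.
Proof. apply (g_cancel D HDr (d (rzero B))). rewrite <- e_d_add, !g_add0r; auto. Qed.
Lemma e_d_opp a : d (ropp B a) = ropp D (d a).
Proof. apply g_opp_uniq; auto. rewrite <- e_d_add, g_addNr, e_d_0; auto. Qed.
Lemma e_d_bl x b : d (bl (th x) b) = rmul D x (d b).
Proof. destruct Hreg as ((_&_&_&H)&_). apply H. Qed.
Lemma e_d_br x b : d (br (th x) b) = rmul D (d b) x.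
Proof. destruct Hreg as ((_&_&_&H)&_). apply H. Qed.

Lemma D_mul1l x : rmul D (rone D) x = x. Proof. apply HD. Qed.
Lemma D_mul1r x : rmul D x (rone D) = x. Proof. apply HD. Qed.

Definition B_mulDr := g_mulDr B HB.
Definition B_mulDl := g_mulDl B HB.
Definition B_mulNr := g_mulNr B HB.
Definition B_mulNl := g_mulNl B HB.
Definition B_mul0r := g_mul0r B HB.
Definition B_mul0l := g_mul0l B HB.
Definition B_mulA := g_mulA B HB.
Definition B_oppK := g_oppK B HB.
Definition B_oppD := g_oppD B HB.
Definition B_opp0 := g_opp0 B HB.
Definition D_mulDr := g_mulDr D HDr.
Definition D_mulDl := g_mulDl D HDr.
Definition D_mulNr := g_mulNr D HDr.
Definition D_mulNl := g_mulNl D HDr.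
Definition D_mul0r := g_mul0r D HDr.
Definition D_mul0l := g_mul0l D HDr.
Definition D_mulA := g_mulA D HDr.
Definition D_oppK := g_oppK D HDr.
Definition D_oppD := g_oppD D HDr.
Definition D_opp0 := g_opp0 D HDr.

End ES.

Global Hint Rewrite B_mulDr B_mulDl B_mulNr B_mulNl B_mul0r B_mul0l B_mulA B_oppK B_oppD B_opp0
  using assumption : exB.
Global Hint Rewrite D_mulDr D_mulDl D_mulNr D_mulNl D_mul0r D_mul0l D_mulA D_oppK D_oppD D_opp0
  D_mul1l D_mul1r using assumption : exD.

Ltac exB HB := autorewrite with exB; try agroup HB.
Ltac via H HB := lazymatch type of H with ?l = ?r =>
  transitivity l; [exB HB | rewrite H; exB HB] end.

Lemma solve_l (R : rng) (HR : is_rng R) x a b : radd R x a = b -> x = radd R b (ropp R a).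
Proof. intros <-. agroup HR. Qed.

Lemma lin2 (R : rng) (HR : is_rng R) a x c :
  x = radd R (radd R (radd R a x) x) (ropp R c) -> x = radd R c (ropp R a).
Proof.
  intro H. pose proof (f_equal (fun y => radd R y (radd R (radd R c (ropp R a)) (ropp R x))) H) as H2.
  simpl in H2. symmetry in H2. via H2 HR.
Qed.

Set Default Proof Using "All".
Section FUN.
Variable B : rng.
Variable D : ring.
Variable d : B -> D.
Variable th : D -> bimul B.
Hypothesis HB : is_rng B.
Hypothesis HD : is_ring D.
Hypothesis Hreg : regular_Esystem B D d th.
Variable Q : ring.
Hypothesis HQ : is_ring Q.
Variables (F : Q -> D) (f g : Q -> Q -> B).
Hypothesis HF : ann_functor B D d th Q F f g.

Let HDr : is_rng D := proj1 HD.

Hint Rewrite (@e_bl_add B D d th) (@e_br_add B D d th) (@e_bl_mul B D d th)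
  (@e_br_mul B D d th) (@e_mul_bl B D d th) (@e_bl_0 B D d th) (@e_br_0 B D d th)
  (@e_bl_opp B D d th) (@e_br_opp B D d th)
  (@e_th_addl B D d th) (@e_th_addr B D d th) (@e_th_mull B D d th) (@e_th_mulr B D d th)
  (@e_th_dl B D d th) (@e_th_dr B D d th) (@e_th_0l B D d th) (@e_th_0r B D d th)
  (@e_th_oppl B D d th) (@e_th_oppr B D d th)
  (@e_th_1l B D d th) (@e_th_1r B D d th) (@e_perm B D d th) using assumption : exB.
Hint Rewrite (@e_d_add B D d th) (@e_d_mul B D d th) (@e_d_0 B D d th)
  (@e_d_opp B D d th) (@e_d_bl B D d th) (@e_d_br B D d th) using assumption : exD.

Let HQr : is_rng Q := proj1 HQ.

Lemma F_add u v : F (radd Q u v) = radd D (radd D (F u) (F v)) (ropp D (d (f u v))).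
Proof.
  destruct HF as (H&_). specialize (H u v). unfold A_mor in H. rewrite H. agroup HDr.
Qed.
Lemma F_mul u v : F (rmul Q u v) = radd D (rmul D (F u) (F v)) (ropp D (d (g u v))).
Proof.
  destruct HF as (_&H&_). specialize (H u v). unfold A_mor in H. rewrite H. agroup HDr.
Qed.
Lemma f_assoc u v w :
  f (radd Q u v) w = radd B (radd B (f u (radd Q v w)) (f v w)) (ropp B (f u v)).
Proof.
  destruct HF as (_&_&H&_). specialize (H u v w). unfold A_comp, A_sum, A_id in H.
  apply solve_l; auto. via H HB.
Qed.
Lemma f_comm u v : f v u = f u v.
Proof. destruct HF as (_&_&_&H&_). apply H. Qed.

Local Notation b0 := (f (rzero Q) (rzero Q)).
Lemma F_0 : F (rzero Q) = d b0.
Proof.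
  destruct HF as (_&_&_&_&(c&Hc&H)&_). unfold A_mor in Hc.
  unfold A_comp, A_sum, A_inv, A_id in H. destruct (H (rzero Q)) as (H1&_).
  assert (E : f (rzero Q) (rzero Q) = c).
  { apply g_eq_sub; auto. rewrite <- H1. agroup HB. }
  rewrite E, Hc. apply g_add0r; auto.
Qed.
Lemma f_0l u : f (rzero Q) u = b0.
Proof.
  destruct HF as (_&_&_&_&(c&Hc&H)&_).
  unfold A_comp, A_sum, A_inv, A_id in H.
  assert (E : forall u, f (rzero Q) u = c).
  { intro w. destruct (H w) as (H1&_). apply g_eq_sub; auto. rewrite <- H1. agroup HB. }
  rewrite !E. reflexivity.
Qed.
Lemma f_0r u : f u (rzero Q) = b0.
Proof. rewrite f_comm. apply f_0l. Qed.

Lemma g_assoc u v w :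
  g (rmul Q u v) w = radd B (radd B (g u (rmul Q v w)) (bl (th (F u)) (g v w)))
                          (ropp B (br (th (F w)) (g u v))).
Proof.
  destruct HF as (_&_&_&_&_&H&_). specialize (H u v w). unfold A_comp, A_tensor, A_id in H.
  apply solve_l; auto. via H HB.
Qed.

Lemma c0_spec : exists c0, F (rone Q) = radd D (d c0) (rone D) /\
  (forall u, g (rone Q) u = br (th (F u)) c0) /\ (forall u, g u (rone Q) = bl (th (F u)) c0).
Proof.
  destruct HF as (_&_&_&_&_&_&(c&Hc&H)&_). unfold A_mor in Hc.
  unfold A_comp, A_tensor, A_inv, A_id in H.
  exists c. split; [exact Hc|split].
  - intro w. destruct (H w) as (H1&_). revert H1. autorewrite with exB. intro H1.
    apply g_eq_sub; auto. rewrite <- H1. agroup HB.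
  - intro w. destruct (H w) as (_&H1). revert H1. autorewrite with exB. intro H1.
    apply g_eq_sub; auto. rewrite <- H1. agroup HB.
Qed.

Lemma g_distl u v w :
  g u (radd Q v w) = radd B (radd B (radd B (f (rmul Q u v) (rmul Q u w)) (g u v)) (g u w))
                          (ropp B (bl (th (F u)) (f v w))).
Proof.
  destruct HF as (_&_&_&_&_&_&_&H&_). specialize (H u v w).
  unfold A_comp, A_tensor, A_sum, A_id in H.
  apply solve_l; auto. via H HB.
Qed.
Lemma g_distr u v w :
  g (radd Q u v) w = radd B (radd B (radd B (f (rmul Q u w) (rmul Q v w)) (g u w)) (g v w))
                          (ropp B (br (th (F w)) (f u v))).
Proof.
  destruct HF as (_&_&_&_&_&_&_&_&H). specialize (H u v w).
  unfold A_comp, A_tensor, A_sum, A_id in H.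
  apply solve_l; auto. via H HB.
Qed.

Lemma Q_mul0r u : rmul Q u (rzero Q) = rzero Q. Proof. apply g_mul0r; auto. Qed.
Lemma Q_mul0l u : rmul Q (rzero Q) u = rzero Q. Proof. apply g_mul0l; auto. Qed.
Lemma Q_add0 : radd Q (rzero Q) (rzero Q) = rzero Q. Proof. apply g_add0l; auto. Qed.

Lemma g_0r u : g u (rzero Q) = radd B (bl (th (F u)) b0) (ropp B b0).
Proof.
  pose proof (g_distl u (rzero Q) (rzero Q)) as H.
  rewrite Q_add0, Q_mul0r in H.
  apply lin2; auto.
Qed.
Lemma g_0l u : g (rzero Q) u = radd B (br (th (F u)) b0) (ropp B b0).
Proof.
  pose proof (g_distr (rzero Q) (rzero Q) u) as H.
  rewrite Q_add0, Q_mul0l in H.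
  apply lin2; auto.
Qed.


Local Notation E := (EF B D th Q F f g).
Local Notation eadd := (EF_add B D th Q F f g).
Local Notation emul := (EF_mul B D th Q F f g).

Ltac dpair := repeat match goal with x : (_ * _)%type |- _ => destruct x end.
Ltac fin_Q := first [ reflexivity | agroup HQr | (autorewrite with exB; agroup HQr) ].

Lemma EF_addA x y z : eadd x (eadd y z) = eadd (eadd x y) z.
Proof.
  destruct x as [b u], y as [b' u'], z as [b'' u''].
  cbn. apply pair_eq.
  - rewrite (f_assoc u u' u''). agroup HB.
  - apply g_addA; auto.
Qed.
Lemma EF_addC x y : eadd x y = eadd y x.
Proof.
  destruct x as [b u], y as [b' u']. cbn. apply pair_eq.
  - rewrite (f_comm u u'). agroup HB.
  - apply g_addC; auto.
Qed.
Definition z0 : rcar B * rcar Q := (ropp B b0, rzero Q).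
Lemma z0_spec x : eadd z0 x = x.
Proof.
  destruct x as [b u]. cbn. apply pair_eq.
  - rewrite (f_0l u). agroup HB.
  - apply g_add0l; auto.
Qed.
Lemma EF_zero_spec x : eadd (EF_zero B D th Q F f g) x = x.
Proof.
  unfold EF_zero. revert x. apply epsilon_spec. exists z0. apply z0_spec.
Qed.
Lemma EF_zero_eq : EF_zero B D th Q F f g = z0.
Proof.
  rewrite <- (z0_spec (EF_zero B D th Q F f g)) at 1. rewrite EF_addC. apply EF_zero_spec.
Qed.
Lemma EF_opp_spec x : eadd (EF_opp B D th Q F f g x) x = EF_zero B D th Q F f g.
Proof.
  unfold EF_opp. apply epsilon_spec. rewrite EF_zero_eq.
  destruct x as [b u].
  exists (radd B (radd B (ropp B b0) (ropp B b)) (ropp B (f (ropp Q u) u)), ropp Q u).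
  cbn. unfold z0. apply pair_eq.
  - agroup HB.
  - apply g_addNl; auto.
Qed.

Lemma EF_mulA x y z : emul x (emul y z) = emul (emul x y) z.
Proof.
  destruct x as [b u], y as [b' u'], z as [b'' u''].
  cbn. apply pair_eq.
  - rewrite (F_mul u u'), (F_mul u' u''), (g_assoc u u' u''). exB HB.
  - apply g_mulA; auto.
Qed.
Lemma EF_mulDl x y z : emul x (eadd y z) = eadd (emul x y) (emul x z).
Proof.
  destruct x as [b u], y as [b' u'], z as [b'' u''].
  cbn. apply pair_eq.
  - rewrite (F_add u' u''), (g_distl u u' u''). exB HB.
  - apply g_mulDr; auto.
Qed.
Lemma EF_mulDr x y z : emul (eadd x y) z = eadd (emul x z) (emul y z).
Proof.
  destruct x as [b u], y as [b' u'], z as [b'' u''].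
  cbn. apply pair_eq.
  - rewrite (F_add u u'), (g_distr u u' u''). exB HB.
  - apply g_mulDl; auto.
Qed.

Lemma one_ex : exists e1, forall x, emul e1 x = x /\ emul x e1 = x.
Proof.
  destruct c0_spec as (c&H1&Hl&Hr).
  exists (ropp B c, rone Q). intros [b u]. split; cbn; apply pair_eq.
  - rewrite H1, Hl. exB HB.
  - apply HQ.
  - rewrite H1, Hr. exB HB.
  - apply HQ.
Qed.
Lemma EF_one_spec x : emul (EF_one B D th Q F f g) x = x /\ emul x (EF_one B D th Q F f g) = x.
Proof.
  unfold EF_one. revert x. apply epsilon_spec. apply one_ex.
Qed.
Lemma EF_one_eq : exists c, F (rone Q) = radd D (d c) (rone D) /\
   EF_one B D th Q F f g = (ropp B c, rone Q).
Proof.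
  destruct c0_spec as (c&H1&Hl&Hr). exists c. split; auto.
  assert (He : forall x, emul x (ropp B c, rone Q) = x).
  { intros [b u]. cbn; apply pair_eq.
    - rewrite H1, Hr. exB HB.
    - apply HQ. }
  rewrite <- (He (EF_one B D th Q F f g)). apply EF_one_spec.
Qed.

Lemma EF_is_ring : is_ring E.
Proof.
  split; [|split].
  - split; [exact EF_addA|split; [exact EF_addC|split; [exact EF_zero_spec|split;
      [exact EF_opp_spec|split; [exact EF_mulA|split; [exact EF_mulDl|exact EF_mulDr]]]]]].
  - intro x. apply EF_one_spec.
  - intro x. apply EF_one_spec.
Qed.

Local Notation j := (EF_j B D th Q F f g).
Local Notation p := (EF_p B D th Q F f g).
Local Notation eps := (EF_eps B D d th Q F f g).

Lemma EF_j_hom : rng_hom B E j.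
Proof.
  split; intros a b; cbn; apply pair_eq.
  - agroup HB.
  - symmetry; apply g_add0l; auto.
  - rewrite g_0l, F_0. exB HB.
  - symmetry; apply g_mul0l; auto.
Qed.

Lemma EF_p_hom : ring_hom E Q p.
Proof.
  split; [split|].
  - intros [] []; reflexivity.
  - intros [] []; reflexivity.
  - change (p (EF_one B D th Q F f g) = rone Q).
    destruct EF_one_eq as (c&_&->). reflexivity.
Qed.

Lemma EF_eps_hom : ring_hom E D eps.
Proof.
  split; [split|].
  - intros [b u] [b' u']. unfold EF_eps. cbn. rewrite (F_add u u').
    autorewrite with exD. agroup HDr.
  - intros [b u] [b' u']. unfold EF_eps. cbn. rewrite (F_mul u u').
    autorewrite with exD. agroup HDr.
  - change (eps (EF_one B D th Q F f g) = rone D).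
    destruct EF_one_eq as (c&Hc&->). unfold EF_eps. cbn. rewrite Hc.
    autorewrite with exD. agroup HDr.
Qed.

Definition thE (x : rcar B * rcar Q) : bimul B :=
  Bimul (fun b => radd B (rmul B (fst x) b) (bl (th (F (snd x))) b))
        (fun b => radd B (rmul B b (fst x)) (br (th (F (snd x))) b)).

Lemma thE_spec e b : j (bl (thE e) b) = emul e (j b) /\ j (br (thE e) b) = emul (j b) e.
Proof.
  destruct e as [b1 u]. split; cbn; apply pair_eq.
  - rewrite g_0r, F_0. exB HB.
  - symmetry; apply g_mul0r; auto.
  - rewrite g_0l, F_0. exB HB.
  - symmetry; apply g_mul0l; auto.
Qed.

Lemma EF_is_ext_core :
  rng_hom B E j /\ ring_hom E Q p /\
  (forall b b', j b = j b' -> b = b') /\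
  (forall u, exists e, p e = u) /\
  (forall e, p e = rzero Q <-> exists b, e = j b) /\
  ring_hom E D eps /\
  exists th' : E -> bimul B,
    (forall e b, j (bl (th' e) b) = rmul E e (j b) /\ j (br (th' e) b) = rmul E (j b) e) /\
    Esystem B E j th' /\
    Esystem_morphism B E j th' B D d th (fun b => b) eps.
Proof.
  split; [exact EF_j_hom|split; [exact EF_p_hom|split; [|split; [|split; [|split; [exact EF_eps_hom|]]]]]].
  - intros a b H. unfold EF_j in H. injection H. intro H1.
    transitivity (radd B (radd B a (ropp B b0)) b0). agroup HB.
    rewrite H1. agroup HB.
  - intro u. exists (rzero B, u). reflexivity.
  - intros [b u]; split.
    + cbn. intros ->. exists (radd B b b0). cbn. apply pair_eq; auto. agroup HB.
    + intros (b'&H). rewrite H. reflexivity.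
  - exists thE. split; [exact thE_spec|split].
    + split; [exact EF_j_hom|split; [split|split]].
      * intros [b1 u]. intros a b. cbn. repeat split; exB HB.
      * intros [b1 u] [b1' u'] b. cbn. rewrite (F_add u u'), (F_mul u u'). repeat split; exB HB.
      * intros b c; cbn. rewrite F_0. split; exB HB.
      * intros x b. apply thE_spec.
    + split; [split; reflexivity|split; [exact EF_eps_hom|split]].
      * intro b. unfold EF_eps. cbn. rewrite F_0. autorewrite with exD. agroup HDr.
      * intros [b1 u] b. unfold EF_eps. cbn. split; exB HB.
Qed.

End FUN.
Unset Default Proof Using.

Ltac lin H HR := lazymatch type of H with ?L = ?R =>
  apply (g_eq_sub _ HR);
  first [ transitivity (ropp _ (radd _ L (ropp _ R))); [agroup HR | rewrite H; agroup HR]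
        | transitivity (radd _ L (ropp _ R)); [agroup HR | rewrite H; agroup HR] ] end.

Section FUN2.
Variable B : rng.
Variable D : ring.
Variable d : B -> D.
Variable th : D -> bimul B.
Hypothesis HB : is_rng B.
Hypothesis HD : is_ring D.
Hypothesis Hreg : regular_Esystem B D d th.
Variable Q : ring.
Hypothesis HQ : is_ring Q.
Variables (F : Q -> D) (f g : Q -> Q -> B) (F' : Q -> D) (f' g' : Q -> Q -> B).
Hypothesis HF : ann_functor B D d th Q F f g.
Hypothesis HF' : ann_functor B D d th Q F' f' g'.
Let HDr : is_rng D := proj1 HD.
Let HQr : is_rng Q := proj1 HQ.

Hint Rewrite (@e_bl_add B D d th) (@e_br_add B D d th) (@e_bl_mul B D d th)
  (@e_br_mul B D d th) (@e_mul_bl B D d th) (@e_bl_0 B D d th) (@e_br_0 B D d th)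
  (@e_bl_opp B D d th) (@e_br_opp B D d th)
  (@e_th_addl B D d th) (@e_th_addr B D d th) (@e_th_mull B D d th) (@e_th_mulr B D d th)
  (@e_th_dl B D d th) (@e_th_dr B D d th) (@e_th_0l B D d th) (@e_th_0r B D d th)
  (@e_th_oppl B D d th) (@e_th_oppr B D d th)
  (@e_th_1l B D d th) (@e_th_1r B D d th) (@e_perm B D d th) using assumption : exB.
Hint Rewrite (@e_d_add B D d th) (@e_d_mul B D d th) (@e_d_0 B D d th)
  (@e_d_opp B D d th) (@e_d_bl B D d th) (@e_d_br B D d th) using assumption : exD.
Let F_add1 := F_add B D d th HB HD Hreg Q HQ F f g HF.
Let F_add2 := F_add B D d th HB HD Hreg Q HQ F' f' g' HF'.
Let F_mul1 := F_mul B D d th HB HD Hreg Q HQ F f g HF.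
Let F_mul2 := F_mul B D d th HB HD Hreg Q HQ F' f' g' HF'.
Let f_0l1 := f_0l B D d th HB HD Hreg Q HQ F f g HF.
Let f_0l2 := f_0l B D d th HB HD Hreg Q HQ F' f' g' HF'.
Let f_0r1 := f_0r B D d th HB HD Hreg Q HQ F f g HF.
Let f_0r2 := f_0r B D d th HB HD Hreg Q HQ F' f' g' HF'.
Let g_0l1 := g_0l B D d th HB HD Hreg Q HQ F f g HF.
Let g_0l2 := g_0l B D d th HB HD Hreg Q HQ F' f' g' HF'.
Let g_0r1 := g_0r B D d th HB HD Hreg Q HQ F f g HF.
Let g_0r2 := g_0r B D d th HB HD Hreg Q HQ F' f' g' HF'.
Let EF_one_spec1 := EF_one_spec B D d th HB HD Hreg Q HQ F f g HF.
Let EF_one_spec2 := EF_one_spec B D d th HB HD Hreg Q HQ F' f' g' HF'.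
Let EF_one_eq1 := EF_one_eq B D d th HB HD Hreg Q HQ F f g HF.
Let EF_one_eq2 := EF_one_eq B D d th HB HD Hreg Q HQ F' f' g' HF'.
Let EF_is_ring1 := EF_is_ring B D d th HB HD Hreg Q HQ F f g HF.
Let EF_is_ring2 := EF_is_ring B D d th HB HD Hreg Q HQ F' f' g' HF'.
Let EF_is_ext_core1 := EF_is_ext_core B D d th HB HD Hreg Q HQ F f g HF.
Let EF_is_ext_core2 := EF_is_ext_core B D d th HB HD Hreg Q HQ F' f' g' HF'.
Let f_comm1 := f_comm B D d th HB HD Hreg Q HQ F f g HF.
Let f_comm2 := f_comm B D d th HB HD Hreg Q HQ F' f' g' HF'.

Local Notation E := (EF B D th Q F f g).
Local Notation E' := (EF B D th Q F' f' g').
Local Notation eadd := (EF_add B D th Q F f g).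
Local Notation eadd' := (EF_add B D th Q F' f' g').
Local Notation emul := (EF_mul B D th Q F f g).
Local Notation emul' := (EF_mul B D th Q F' f' g').
Local Notation j := (EF_j B D th Q F f g).
Local Notation j' := (EF_j B D th Q F' f' g').
Local Notation p := (EF_p B D th Q F f g).
Local Notation p' := (EF_p B D th Q F' f' g').
Local Notation eps := (EF_eps B D d th Q F f g).
Local Notation eps' := (EF_eps B D d th Q F' f' g').

Lemma unit_transport (eta : rcar B * rcar Q -> rcar B * rcar Q) :
  (forall x y, eta (emul x y) = emul' (eta x) (eta y)) -> (forall y, exists x, eta x = y) ->
  eta (EF_one B D th Q F f g) = EF_one B D th Q F' f' g'.
Proof.
  intros Hm Hs.
  assert (Hr : forall y, emul' y (eta (EF_one B D th Q F f g)) = y).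
  { intro y. destruct (Hs y) as (x&<-). rewrite <- Hm. f_equal. apply (proj2 (EF_one_spec1 x)). }
  transitivity (emul' (EF_one B D th Q F' f' g') (eta (EF_one B D th Q F f g))).
  - symmetry. apply (proj1 (EF_one_spec2 _)).
  - apply Hr.
Qed.

Lemma hom_equiv : ann_homotopic B D d th Q F f g F' f' g' ->
  ext_equiv B D Q E j p eps E' j' p' eps'.
Proof.
  intros (a&Ha1&Ha2&Ha3). unfold A_mor in Ha1. unfold A_comp, A_sum, A_tensor in Ha2, Ha3.
  assert (Ha2' : forall u v, a (radd Q u v) =
     radd B (radd B (f u v) (radd B (a u) (a v))) (ropp B (f' u v))).
  { intros u v. apply solve_l; auto. }
  assert (Ha3' : forall u v, g' u v = radd B (radd B (g u v)
     (radd B (radd B (rmul B (a u) (a v)) (br (th (F v)) (a u))) (bl (th (F u)) (a v))))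
     (ropp B (a (rmul Q u v)))).
  { intros u v. apply solve_l; auto. rewrite (g_addC B HB). apply Ha3. }
  set (eta := fun x : rcar B * rcar Q => (radd B (fst x) (ropp B (a (snd x))), snd x)).
  assert (Hadd : forall x y, eta (eadd x y) = eadd' (eta x) (eta y)).
  { intros [b u] [b' u']. unfold eta; cbn. apply pair_eq; auto. rewrite (Ha2' u u'). agroup HB. }
  assert (Hmul : forall x y, eta (emul x y) = emul' (eta x) (eta y)).
  { intros [b u] [b' u']. unfold eta; cbn. apply pair_eq; auto. rewrite (Ha1 u), (Ha1 u'), (Ha3' u u'). exB HB. }
  exists eta. split; [split; [split; [exact Hadd|exact Hmul]|]|split; [|split]].
  - change (eta (EF_one B D th Q F f g) = EF_one B D th Q F' f' g').
    apply unit_transport; auto. intros [b u]. exists (radd B b (a u), u). unfold eta; cbn. apply pair_eq; auto. agroup HB.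
  - intro b. unfold eta; cbn. apply pair_eq; auto.
    pose proof (Ha2 (rzero Q) (rzero Q)) as H. rewrite (g_add0l Q HQr) in H.
    assert (H2 : f' (rzero Q) (rzero Q) = radd B (f (rzero Q) (rzero Q)) (a (rzero Q))).
    { apply (g_cancel B HB (a (rzero Q))). rewrite H. agroup HB. }
    rewrite H2. agroup HB.
  - intros [b u]; reflexivity.
  - intros [b u]. unfold EF_eps. cbn. rewrite (Ha1 u). autorewrite with exD. agroup HDr.
Qed.

Lemma equiv_hom : ext_equiv B D Q E j p eps E' j' p' eps' ->
  ann_homotopic B D d th Q F f g F' f' g'.
Proof.
  intros (eta&((Hadd&Hmul)&_)&Hj&Hp&He).
  assert (Hadd' : forall x y, eta (eadd x y) = eadd' (eta x) (eta y)) by exact Hadd.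
  assert (Hmul' : forall x y, eta (emul x y) = emul' (eta x) (eta y)) by exact Hmul.
  set (c := fun u => fst (eta (rzero B, u))).
  assert (Hs : forall x, snd (eta x) = snd x) by (intro x; exact (Hp x)).
  assert (H0 : forall u, eta (rzero B, u) = (c u, u)).
  { intro u. transitivity (fst (eta (rzero B, u)), snd (eta (rzero B, u))).
    apply surjective_pairing. rewrite Hs. reflexivity. }
  assert (Hb : forall b u, eta (b, u) = (radd B b (c u), u)).
  { intros b u. transitivity (eta (eadd (j b) (rzero B, u))).
    - f_equal. cbn. apply pair_eq. rewrite (f_0l1 u). agroup HB. symmetry; apply (g_add0l Q HQr).
    - rewrite Hadd', Hj, H0. cbn. apply pair_eq. rewrite (f_0l2 u). agroup HB. apply (g_add0l Q HQr). }
  assert (HFe : forall u, F' u = radd D (d (ropp B (c u))) (F u)).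
  { intro u. pose proof (He (rzero B, u)) as H. rewrite H0 in H. unfold EF_eps in H. cbn in H.
    transitivity (radd D (ropp D (d (c u))) (radd D (d (c u)) (F' u))). agroup HDr.
    rewrite H. autorewrite with exD. agroup HDr. }
  exists (fun u => ropp B (c u)). split; [|split].
  - intro u. apply HFe.
  - intros u v. unfold A_comp, A_sum.
    pose proof (Hadd' (rzero B, u) (rzero B, v)) as H. rewrite !H0 in H. cbn in H.
    rewrite Hb in H. apply (f_equal fst) in H. cbn in H. lin H HB.
  - intros u v. unfold A_comp, A_tensor.
    assert (Hm : emul (rzero B, u) (rzero B, v) = (g u v, rmul Q u v)).
    { cbn. apply pair_eq; [exB HB|reflexivity]. }
    pose proof (Hmul' (rzero B, u) (rzero B, v)) as H. rewrite Hm, Hb, !H0 in H. cbn in H.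
    apply (f_equal fst) in H. cbn in H. rewrite (HFe u), (HFe v) in H.
    autorewrite with exB in H. autorewrite with exB. lin H HB.
Qed.

End FUN2.

Lemma hom_opp (R S : rng) (HR : is_rng R) (HS : is_rng S) (h : R -> S) :
  (forall x y, h (radd R x y) = radd S (h x) (h y)) -> forall x, h (ropp R x) = ropp S (h x).
Proof.
  intros Ha x. assert (H0 : h (rzero R) = rzero S).
  { apply (g_cancel S HS (h (rzero R))). rewrite <- Ha, !g_add0r; auto. }
  apply g_opp_uniq; auto. rewrite <- Ha, g_addNr, H0; auto.
Qed.
Lemma hom_0 (R S : rng) (HR : is_rng R) (HS : is_rng S) (h : R -> S) :
  (forall x y, h (radd R x y) = radd S (h x) (h y)) -> h (rzero R) = rzero S.
Proof.
  intros Ha. apply (g_cancel S HS (h (rzero R))). rewrite <- Ha, !g_add0r; auto.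
Qed.

Definition sE (Q E : ring) (p : E -> Q) (u : Q) : E :=
  epsilon (inhabits (rone E)) (fun e => p e = u).
Definition jinvE (B : rng) (E : ring) (j : B -> E) (e : E) : B :=
  epsilon (inhabits (rzero B)) (fun b => j b = e).

Section SURJ.
Variable B : rng.
Variable D : ring.
Variable d : B -> D.
Variable th : D -> bimul B.
Hypothesis HB : is_rng B.
Hypothesis HD : is_ring D.
Hypothesis Hreg : regular_Esystem B D d th.
Variable Q : ring.
Hypothesis HQ : is_ring Q.
Variables (E : ring) (j : B -> E) (p : E -> Q) (eps : E -> D).
Hypothesis HE : is_extension B D d th Q E j p eps.
Let HDr : is_rng D := proj1 HD.
Let HQr : is_rng Q := proj1 HQ.
Let HEr : is_rng E := proj1 (proj1 HE).

Hint Rewrite (@e_bl_add B D d th) (@e_br_add B D d th) (@e_bl_mul B D d th)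
  (@e_br_mul B D d th) (@e_mul_bl B D d th) (@e_bl_0 B D d th) (@e_br_0 B D d th)
  (@e_bl_opp B D d th) (@e_br_opp B D d th)
  (@e_th_addl B D d th) (@e_th_addr B D d th) (@e_th_mull B D d th) (@e_th_mulr B D d th)
  (@e_th_dl B D d th) (@e_th_dr B D d th) (@e_th_0l B D d th) (@e_th_0r B D d th)
  (@e_th_oppl B D d th) (@e_th_oppr B D d th)
  (@e_th_1l B D d th) (@e_th_1r B D d th) (@e_perm B D d th) using assumption : exB.
Hint Rewrite (@e_d_add B D d th) (@e_d_mul B D d th) (@e_d_0 B D d th)
  (@e_d_opp B D d th) (@e_d_bl B D d th) (@e_d_br B D d th) using assumption : exD.

Let s := sE Q E p.
Let ji := jinvE B E j.

Lemma s_spec u : p (s u) = u.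
Proof. unfold s, sE. apply epsilon_spec. apply HE. Qed.

Lemma j_add a b : j (radd B a b) = radd E (j a) (j b). Proof. apply HE. Qed.
Lemma j_mul a b : j (rmul B a b) = rmul E (j a) (j b). Proof. apply HE. Qed.
Lemma j_opp a : j (ropp B a) = ropp E (j a). Proof. apply hom_opp; auto. exact j_add. Qed.
Lemma j_0 : j (rzero B) = rzero E. Proof. apply hom_0; auto. exact j_add. Qed.
Lemma j_inj a b : j a = j b -> a = b. Proof. apply HE. Qed.
Lemma p_add a b : p (radd E a b) = radd Q (p a) (p b). Proof. apply HE. Qed.
Lemma p_mul a b : p (rmul E a b) = rmul Q (p a) (p b). Proof. apply HE. Qed.
Lemma p_opp a : p (ropp E a) = ropp Q (p a). Proof. apply hom_opp; auto. exact p_add. Qed.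
Lemma p_1 : p (rone E) = rone Q. Proof. apply HE. Qed.
Lemma eps_add a b : eps (radd E a b) = radd D (eps a) (eps b). Proof. apply HE. Qed.
Lemma eps_mul a b : eps (rmul E a b) = rmul D (eps a) (eps b). Proof. apply HE. Qed.
Lemma eps_opp a : eps (ropp E a) = ropp D (eps a). Proof. apply hom_opp; auto. exact eps_add. Qed.
Lemma eps_1 : eps (rone E) = rone D. Proof. apply HE. Qed.
Lemma ker_j e : p e = rzero Q -> j (ji e) = e.
Proof.
  intro H. unfold ji, jinvE. apply epsilon_spec. apply HE in H. destruct H as (b&->). eauto.
Qed.
Lemma p_j b : p (j b) = rzero Q.
Proof. apply HE. eauto. Qed.
Lemma eps_j b : eps (j b) = d b.
Proof.
  pose proof HE as HE0. destruct HE0 as (_&_&_&_&_&_&_&th'&_&_&(_&_&H&_)). apply H.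
Qed.
Lemma j_bl e b : j (bl (th (eps e)) b) = rmul E e (j b).
Proof.
  pose proof HE as HE0. destruct HE0 as (_&_&_&_&_&_&_&th'&H1&_&(_&_&_&H)). destruct (H e b) as (<-&_). apply H1.
Qed.
Lemma j_br e b : j (br (th (eps e)) b) = rmul E (j b) e.
Proof.
  pose proof HE as HE0. destruct HE0 as (_&_&_&_&_&_&_&th'&H1&_&(_&_&_&H)). destruct (H e b) as (_&<-). apply H1.
Qed.

Definition ff u v := ji (radd E (radd E (s u) (s v)) (ropp E (s (radd Q u v)))).
Definition gg u v := ji (radd E (rmul E (s u) (s v)) (ropp E (s (rmul Q u v)))).
Definition FF u := eps (s u).

Lemma j_ff u v : j (ff u v) = radd E (radd E (s u) (s v)) (ropp E (s (radd Q u v))).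
Proof.
  apply ker_j. rewrite p_add, p_opp, p_add, !s_spec. apply g_addNr; auto.
Qed.
Lemma j_gg u v : j (gg u v) = radd E (rmul E (s u) (s v)) (ropp E (s (rmul Q u v))).
Proof.
  apply ker_j. rewrite p_add, p_opp, p_mul, !s_spec. apply g_addNr; auto.
Qed.

Lemma E_mul1l x : rmul E (rone E) x = x. Proof. apply HE. Qed.
Lemma E_mul1r x : rmul E x (rone E) = x. Proof. apply HE. Qed.

Hint Rewrite j_add j_mul j_opp j_0 j_ff j_gg j_bl j_br : exJ.
Hint Rewrite (g_mulDr E HEr) (g_mulDl E HEr) (g_mulNr E HEr) (g_mulNl E HEr) (g_mul0r E HEr)
  (g_mul0l E HEr) (g_mulA E HEr) (g_oppK E HEr) (g_oppD E HEr) (g_opp0 E HEr) E_mul1l E_mul1r : exE.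

Ltac jx := apply j_inj; unfold FF in *; autorewrite with exJ; autorewrite with exE.

Lemma surj_functor : ann_functor B D d th Q FF ff gg.
Proof.
  assert (Hs00 : s (radd Q (rzero Q) (rzero Q)) = s (rzero Q)) by (rewrite (g_add0l Q HQr); reflexivity).
  split; [|split; [|split; [|split; [|split; [|split; [|split; [|split]]]]]]]; unfold A_mor, A_comp, A_sum, A_id, A_inv, A_tensor.
  - intros u v. unfold FF. rewrite <- eps_j, j_ff. rewrite !eps_add, !eps_opp. agroup HDr.
  - intros u v. unfold FF. rewrite <- eps_j, j_gg. rewrite !eps_add, !eps_opp, eps_mul. agroup HDr.
  - intros u v w. jx. rewrite (g_addA Q HQr u v w). agroup HEr.
  - intros u v. jx. rewrite (g_addC Q HQr v u). agroup HEr.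
  - exists (ff (rzero Q) (rzero Q)). split.
    + unfold FF. rewrite <- eps_j, j_ff, Hs00. rewrite !eps_add, !eps_opp. agroup HDr.
    + intro u. split; jx.
      * rewrite (g_add0l Q HQr u), Hs00. agroup HEr.
      * rewrite (g_add0r Q HQr u), Hs00. agroup HEr.
  - intros u v w. jx. rewrite (g_mulA Q HQr u v w). agroup HEr.
  - exists (ji (radd E (s (rone Q)) (ropp E (rone E)))). split.
    + unfold FF. rewrite <- eps_j, ker_j.
      * rewrite eps_add, eps_opp, eps_1. agroup HDr.
      * rewrite p_add, p_opp, s_spec, p_1. apply g_addNr; auto.
    + assert (Hk : p (radd E (s (rone Q)) (ropp E (rone E))) = rzero Q).
      { rewrite p_add, p_opp, s_spec, p_1. apply g_addNr; auto. }
      intro u. split; jx; rewrite ?ker_j by exact Hk; autorewrite with exE.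
      * rewrite (proj1 (proj2 HQ) u). agroup HEr.
      * rewrite (proj2 (proj2 HQ) u). agroup HEr.
  - intros u v w. jx. rewrite (g_mulDr Q HQr u v w). agroup HEr.
  - intros u v w. jx. rewrite (g_mulDl Q HQr u v w). agroup HEr.
Qed.

Local Notation EE := (EF B D th Q FF ff gg).
Lemma surj_equiv : ext_equiv B D Q EE (EF_j B D th Q FF ff gg) (EF_p B D th Q FF ff gg)
   (EF_eps B D d th Q FF ff gg) E j p eps.
Proof.
  assert (Hs00 : s (radd Q (rzero Q) (rzero Q)) = s (rzero Q)) by (rewrite (g_add0l Q HQr); reflexivity).
  set (eta := fun x : rcar B * rcar Q => radd E (j (fst x)) (s (snd x))).
  assert (Hmul : forall x y, eta (EF_mul B D th Q FF ff gg x y) = rmul E (eta x) (eta y)).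
  { intros [b u] [b' u']. unfold eta; cbn. unfold FF. autorewrite with exJ exE. agroup HEr. }
  assert (Hsurj : forall e, exists x, eta x = e).
  { intro e. exists (ji (radd E e (ropp E (s (p e)))), p e). unfold eta; cbn. rewrite ker_j.
    - agroup HEr.
    - rewrite p_add, p_opp, s_spec. apply g_addNr; auto. }
  exists eta. split; [split; [split|]|split; [|split]].
  - intros [b u] [b' u']. unfold eta; cbn. autorewrite with exJ exE. agroup HEr.
  - exact Hmul.
  - change (eta (EF_one B D th Q FF ff gg) = rone E).
    pose proof (EF_one_spec B D d th HB HD Hreg Q HQ FF ff gg surj_functor) as H1.
    assert (Hl : forall e, rmul E (eta (EF_one B D th Q FF ff gg)) e = e).
    { intro e. destruct (Hsurj e) as (x&<-). rewrite <- Hmul. f_equal. apply (proj1 (H1 x)). }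
    rewrite <- (Hl (rone E)). symmetry. apply E_mul1r.
  - intro b. unfold eta; cbn. autorewrite with exJ exE. rewrite Hs00. agroup HEr.
  - intros [b u]. unfold eta; cbn. rewrite p_add, p_j, s_spec. apply g_add0l; auto.
  - intros [b u]. unfold eta, EF_eps, FF; cbn. rewrite eps_add, eps_j. reflexivity.
Qed.

End SURJ.
Theorem mainTheorem8
  (B : rng) (D : ring) (d : B -> D) (th : D -> bimul B)
  (HB : is_rng B) (HD : is_ring D) (Hreg : regular_Esystem B D d th)
  (Q : ring) (HQ : is_ring Q)
  (C : ring) (q : D -> C) (HC : is_ring C) (Hcoker : is_coker B D d C q)
  (psi : Q -> C) (Hpsi : ring_hom Q C psi) :
  (* Omega is well defined: E_F is an extension of type B -> D inducing psi *)
  (forall F f g,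
     ann_functor B D d th Q F f g -> induces_psi Q D C q psi F ->
     is_extension B D d th Q (EF B D th Q F f g) (EF_j B D th Q F f g) (EF_p B D th Q F f g) (EF_eps B D d th Q F f g) /\
     ext_induces_psi Q D C q psi (EF B D th Q F f g) (EF_p B D th Q F f g) (EF_eps B D d th Q F f g)) /\
  (* Omega is constant on homotopy classes *)
  (forall F f g F' f' g',
     ann_functor B D d th Q F f g -> induces_psi Q D C q psi F ->
     ann_functor B D d th Q F' f' g' -> induces_psi Q D C q psi F' ->
     ann_homotopic B D d th Q F f g F' f' g' ->
     ext_equiv B D Q
       (EF B D th Q F f g) (EF_j B D th Q F f g) (EF_p B D th Q F f g) (EF_eps B D d th Q F f g)
       (EF B D th Q F' f' g') (EF_j B D th Q F' f' g') (EF_p B D th Q F' f' g') (EF_eps B D d th Q F' f' g')) /\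
  (* Omega is injective on homotopy classes *)
  (forall F f g F' f' g',
     ann_functor B D d th Q F f g -> induces_psi Q D C q psi F ->
     ann_functor B D d th Q F' f' g' -> induces_psi Q D C q psi F' ->
     ext_equiv B D Q
       (EF B D th Q F f g) (EF_j B D th Q F f g) (EF_p B D th Q F f g) (EF_eps B D d th Q F f g)
       (EF B D th Q F' f' g') (EF_j B D th Q F' f' g') (EF_p B D th Q F' f' g') (EF_eps B D d th Q F' f' g') ->
     ann_homotopic B D d th Q F f g F' f' g') /\
  (* Omega is surjective onto Ext_{B->D}(Q, B, psi) *)
  (forall (E : ring) (j : B -> E) (p : E -> Q) (eps : E -> D),
     is_extension B D d th Q E j p eps -> ext_induces_psi Q D C q psi E p eps ->
     exists F f g,
       ann_functor B D d th Q F f g /\ induces_psi Q D C q psi F /\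
       ext_equiv B D Q
         (EF B D th Q F f g) (EF_j B D th Q F f g) (EF_p B D th Q F f g) (EF_eps B D d th Q F f g)
         E j p eps).
Proof.
  split; [|split; [|split]].
  - intros F f g HF Hind. split.
    + split; [exact (EF_is_ring B D d th HB HD Hreg Q HQ F f g HF)|].
      exact (EF_is_ext_core B D d th HB HD Hreg Q HQ F f g HF).
    + intros [b u]. unfold EF_p, EF_eps. cbn.
      destruct Hcoker as (((Hqa&_)&_)&_&Hk).
      rewrite Hqa, (proj2 (Hk (d b)) (ex_intro _ b eq_refl)), Hind. symmetry. apply (g_add0l C (proj1 HC)).
  - intros F f g F' f' g' HF _ HF' _ Hh. eapply hom_equiv; eauto.
  - intros F f g F' f' g' HF _ HF' _ Heq. eapply equiv_hom; eauto.
  - intros E j p eps HE Hpsi'.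
    exists (FF D Q E p eps), (ff B Q E j p), (gg B Q E j p).
    split; [exact (surj_functor B D d th HB HD Q HQ E j p eps HE)|split].
    + intro u. unfold FF. rewrite <- (Hpsi' (sE Q E p u)). f_equal. eapply s_spec; eauto.
    + exact (surj_equiv B D d th HB HD Hreg Q HQ E j p eps HE).
Qed.
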